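(* Let $Y$ be a real Hilbert space, let $\mu>0$, and let $Q\colon Y\rightrightarrows Y$ be $\mu$-unmonotone with domain $D(Q)=Y$. Suppose also that $-Q-\mu\mathbb{I}_Y$ is maximally monotone. Then $Q$ touches every maximally monotone multifunction on $Y$; that is, for every maximally monotone $M\colon Y\rightrightarrows Y$, the set $G(M)\cap G(Q)$ is a singleton in $Y\times Y$.
   Context: For a multifunction $Q\colon Y\rightrightarrows Y$, $G(Q)=\{(y,q): q\in Qy\}$ is its graph and $D(Q)=\{y: Qy\neq\emptyset\}$ its domain. For $\mu>0$, $Q$ is $\mu$-unmonotone if for all $(y_1,q_1),(y_2,q_2)\in G(Q)$, $\langle y_1-y_2,q_1-q_2\rangle+\mu\|(y_1-y_2,q_1-q_2)\|^2\le 0$, where $\|(a,b)\|^2=\|a\|^2+\|b\|^2$. Two multifunctions $M,Q$ on $Y$ touch if $G(M)\cap G(Q)$ is a singleton. $\mathbb{I}_Y$ is the identity on $Y$ and $-Q-\mu\mathbb{I}_Y$ is the multifunction $y\mapsto\{-q-\mu y: q\in Qy\}$. *)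

(* Defs.v *)
From mathcomp Require Import all_boot all_order all_algebra.
From mathcomp Require Import all_classical all_reals all_analysis.
Import Order.TTheory GRing.Theory Num.Theory.
Import numFieldNormedType.Exports.
Local Open Scope classical_set_scope.
Local Open Scope ring_scope.

Set Implicit Arguments. Unset Strict Implicit. Unset Printing Implicit Defensive.

(* A real Hilbert space: a complete normed space over R whose norm is induced
   by a (symmetric, bilinear) inner product [ip]: `|x|^2 = ip x x. *)
Definition is_inner_product (R : realType) (Y : completeNormedModType R)
    (ip : Y -> Y -> R) : Prop :=
  [/\ (forall x y, ip x y = ip y x),
      (forall (a : R) x y z, ip (a *: x + y) z = a * ip x z + ip y z) &
      (forall x, `|x| ^+ 2 = ip x x)].

(* multifunctions Y => Y are maps Y -> set Y *)
Definition graph (Y : Type) (Q : Y -> set Y) : set (Y * Y) :=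
  [set p | Q p.1 p.2].

Definition domain (Y : Type) (Q : Y -> set Y) : set Y :=
  [set y | Q y !=set0].

Definition monotone (R : realType) (Y : completeNormedModType R)
    (ip : Y -> Y -> R) (M : Y -> set Y) : Prop :=
  forall y1 q1 y2 q2, M y1 q1 -> M y2 q2 -> 0 <= ip (y1 - y2) (q1 - q2).

Definition maximally_monotone (R : realType) (Y : completeNormedModType R)
    (ip : Y -> Y -> R) (M : Y -> set Y) : Prop :=
  monotone ip M /\
  forall M' : Y -> set Y, monotone ip M' -> graph M `<=` graph M' ->
    graph M' = graph M.

(* mu-unmonotone, with ||(a,b)||^2 = ||a||^2 + ||b||^2 *)
Definition unmonotone (R : realType) (Y : completeNormedModType R)
    (ip : Y -> Y -> R) (mu : R) (Q : Y -> set Y) : Prop :=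
  forall y1 q1 y2 q2, Q y1 q1 -> Q y2 q2 ->
    ip (y1 - y2) (q1 - q2) + mu * (`|y1 - y2| ^+ 2 + `|q1 - q2| ^+ 2) <= 0.

Definition neg_shift (R : realType) (Y : completeNormedModType R)
    (mu : R) (Q : Y -> set Y) : Y -> set Y :=
  fun y => [set - q - mu *: y | q in Q y].

Definition touch (Y : Type) (M Q : Y -> set Y) : Prop :=
  exists p : Y * Y, graph M `&` graph Q = [set p].

(* Main.v *)
Require Import Defs.
From mathcomp Require Import all_boot all_order all_algebra.
From mathcomp Require Import all_classical all_reals all_analysis.
From mathcomp Require Import ring lra.
Import Order.TTheory GRing.Theory Num.Theory.
Import numFieldNormedType.Exports.
Local Open Scope classical_set_scope.
Local Open Scope ring_scope.

Section IP.
Context {R : realType} {Y : completeNormedModType R} {ip : Y -> Y -> R}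
  (Hip : is_inner_product ip).

Lemma ipC x y : ip x y = ip y x.
Proof. by case: Hip. Qed.
Lemma ipL a x y z : ip (a *: x + y) z = a * ip x z + ip y z.
Proof. by case: Hip. Qed.
Lemma ipxx x : ip x x = `|x| ^+ 2.
Proof. by case: Hip => _ _ ->. Qed.
Lemma ip0l z : ip 0 z = 0.
Proof. have := ipL 1 0 0 z; rewrite scaler0 addr0 mul1r => h; lra. Qed.
Lemma ipDl x y z : ip (x + y) z = ip x z + ip y z.
Proof. by have := ipL 1 x y z; rewrite scale1r mul1r. Qed.
Lemma ipZl a x z : ip (a *: x) z = a * ip x z.
Proof. by rewrite -[a *: x]addr0 ipL ip0l addr0. Qed.
Lemma ipNl x z : ip (- x) z = - ip x z.
Proof. by rewrite -scaleN1r ipZl mulN1r. Qed.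
Lemma ipBl x y z : ip (x - y) z = ip x z - ip y z.
Proof. by rewrite ipDl ipNl. Qed.
Lemma ip0r z : ip z 0 = 0.
Proof. by rewrite ipC ip0l. Qed.
Lemma ipDr x y z : ip z (x + y) = ip z x + ip z y.
Proof. by rewrite ipC ipDl !(ipC z). Qed.
Lemma ipZr a x z : ip z (a *: x) = a * ip z x.
Proof. by rewrite ipC ipZl ipC. Qed.
Lemma ipNr x z : ip z (- x) = - ip z x.
Proof. by rewrite ipC ipNl ipC. Qed.
Lemma ipBr x y z : ip z (x - y) = ip z x - ip z y.
Proof. by rewrite ipDr ipNr. Qed.
Lemma ip_ge0 x : 0 <= ip x x.
Proof. by rewrite ipxx sqr_ge0. Qed.
Lemma ip_eq0 x : ip x x <= 0 -> x = 0.
Proof. rewrite ipxx => h; apply/normr0_eq0; nra. Qed.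


Ltac ipexp := rewrite ?(ipDl, ipDr, ipBl, ipBr, ipZl, ipZr, ipNl, ipNr, ip0l, ip0r).

Lemma ip_pol a b : ip a b = (`|a + b| ^+ 2 - `|a| ^+ 2 - `|b| ^+ 2) / 2.
Proof. rewrite -!ipxx; ipexp; rewrite (ipC b a); by field. Qed.

Lemma ip_cvg (a b : nat -> Y) la lb : a @ \oo --> la -> b @ \oo --> lb ->
  (fun n => ip (a n) (b n)) @ \oo --> ip la lb.
Proof.
move=> ha hb.
have sq (c : nat -> Y) lc : c @ \oo --> lc -> (fun n => `|c n| ^+ 2) @ \oo --> `|lc| ^+ 2.
  move=> h; under eq_fun do rewrite expr2; rewrite expr2; apply: cvgM; exact: cvg_norm.
under eq_fun do rewrite ip_pol; rewrite ip_pol.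
apply: cvgMr_tmp; apply: cvgB; [apply: cvgB|]; apply: sq => //; exact: cvgD.
Qed.


Lemma eq_ler_sub (x y : R) : x <= y -> 0 <= y - x.
Proof. by rewrite subr_ge0. Qed.

Lemma cauchy_ip (z : nat -> Y) :
  (forall n k, `|z n - z k| ^+ 2 <= 4 * ((n.+1%:R)^-1 + (k.+1%:R)^-1)) -> cvgn z.
Proof.
move=> hz; apply/cauchy_cvgP; apply/cauchy_ballP => e e0; near_simpl.
have [N hN] : exists N : nat, 8 / e ^+ 2 < N.+1%:R by eexists; apply: truncnS_gt.
exists ([set n | (N <= n)%N], [set n | (N <= n)%N]); first by split; exists N.
move=> [n k] [/= Nn Nk]; rewrite -ball_normE /=.
have h := hz n k.
have le_inv j : (N <= j)%N -> (j.+1%:R : R)^-1 <= (N.+1%:R)^-1.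
  by move=> Nj; rewrite lef_pV2 ?posrE ?ler_nat.
have en := le_inv _ Nn; have ek := le_inv _ Nk.
have e20 : 0 < e ^+ 2 by rewrite exprn_gt0.
rewrite ltr_pdivrMr // in hN.
have K0 : 0 < (N.+1%:R : R) by [].
have KK : (N.+1%:R : R) * (N.+1%:R)^-1 = 1 by rewrite mulfV // gt_eqF.
set a := (n.+1%:R : R)^-1 in h en; set b := (k.+1%:R : R)^-1 in h ek.
set c := (N.+1%:R : R)^-1 in en ek KK.
set K := (N.+1%:R : R) in K0 KK hN.
set d := `|z n - z k| in h *.
have n0 : 0 <= d by rewrite /d.
rewrite ltNge; apply/negP => he.
have h3 : e * e <= d * d by apply: ler_pM => //; exact: ltW.
rewrite -expr2 in h3; move: hN h3; rewrite expr2 => hN h3.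
have h1 : e * e <= 8 * c by lra.
have := mulr_ge0 (ltW K0) (eq_ler_sub _ _ h1).
nra.
Qed.

Lemma alg_E (t r r0 a1 a2 a3 a4 a5 a6 : R) : (1 - t) * r0 + t * r + ((1 - t) * ((1 - t) * a1) + (1 - t) * (t * a2) + (t * ((1 - t) * a2) + t * (t * a3)) + ((1 - t) * ((1 - t) * a4) + (1 - t) * (t * a5) + (t * ((1 - t) * a5) + t * (t * a6)))) / 2 - (r0 + (a1 + a4) / 2) = t * (r - r0 + (a2 - a1) + (a5 - a4) + t * ((a3 - a2 + (- a2 - - a1) + (a6 - a5 + (- a5 - - a4))) / 2)).
Proof. by field. Qed.

Lemma alg_A (D t c K : R) : t * D = - c -> D = 1 - c + K -> D * (c + t * K) = c * (1 - c).
Proof.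
move=> h1 h2; have -> : D * (c + t * K) = D * c + (t * D) * K by ring.
rewrite h1 h2; ring.
Qed.

Lemma minty (G : Y -> Y -> Prop)
  (Hmono : forall y v y' v', G y v -> G y' v' -> 0 <= ip (y - y') (v - v'))
  (Hmax : forall a b, (forall y v, G y v -> 0 <= ip (y - a) (v - b)) -> G a b) :
  exists x, G x (- x).
Proof.
pose S x u r := forall y v, G y v -> ip x v + ip y u - ip y v <= r.
pose psi x u r := r + (ip x x + ip u u) / 2.
have S_lb x u r : S x u r -> ip x u <= r.
  move=> Sx; rewrite leNgt; apply/negP => hr.
  have Gxu : G x u.
    apply: Hmax => y v Gyv; have := Sx y v Gyv; ipexp; rewrite (ipC x v); lra.
  by have := Sx x u Gxu; lra.
have G_S y v : G y v -> S y v (ip y v).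
  move=> Gyv y' v' G'; have := Hmono y v y' v' Gyv G'; ipexp; rewrite (ipC y' v); lra.
have S_conv a b x u r x' u' r' : 0 <= a -> 0 <= b -> a + b = 1 ->
    S x u r -> S x' u' r' -> S (a *: x + b *: x') (a *: u + b *: u') (a * r + b * r').
  move=> a0 b0 ab S1 S2 y v Gyv; ipexp.
  have h1 := S1 y v Gyv; have h2 := S2 y v Gyv.
  have -> : ip y v = (a + b) * ip y v by rewrite ab mul1r.
  nra.
have psi_ge0 x u r : S x u r -> 0 <= psi x u r.
  move=> /S_lb h; have := ip_ge0 (x + u); rewrite /psi; ipexp; rewrite (ipC u x); lra.
have [y0 [v0 G0]] : exists y v, G y v.
  case: (pselect (exists y v, G y v)) => // nG; exists 0, 0; apply: Hmax => y v Gyv.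
  by exfalso; apply: nG; exists y, v.
pose V := [set z | exists x u r, S x u r /\ z = psi x u r].
have hV : has_inf V.
  split; first by exists (psi y0 v0 (ip y0 v0)), y0, v0, (ip y0 v0); split => //; exact: G_S.
  by exists 0 => z [x [u [r [Sx ->]]]]; exact: psi_ge0.
set m := inf V.
have Hm x u r : S x u r -> m <= psi x u r.
  move=> Sx; apply: (ge_inf (proj2 hV)); by exists x, u, r.
have Hseq : forall n : nat, exists t : Y * Y * R,
    S t.1.1 t.1.2 t.2 /\ psi t.1.1 t.1.2 t.2 < m + (n.+1%:R)^-1.
  move=> n; have e0 : 0 < (n.+1%:R : R)^-1 by rewrite invr_gt0.
  have [z [x [u [r [Sx ->]]]] hz] := inf_adherent e0 hV.
  by exists (x, u, r).
have [t Ht] := choice Hseq.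
pose xs n := (t n).1.1; pose us n := (t n).1.2; pose rs n := (t n).2.
have St n : S (xs n) (us n) (rs n) := (Ht n).1.
have Pt n : psi (xs n) (us n) (rs n) < m + (n.+1%:R)^-1 := (Ht n).2.
have half0 : (0 : R) <= 1/2 by [].
have halfS : (1/2 : R) + 1/2 = 1 by field.
have cest n k : ip (xs n - xs k) (xs n - xs k) + ip (us n - us k) (us n - us k)
    <= 4 * ((n.+1%:R)^-1 + (k.+1%:R)^-1).
  have := Hm _ _ _ (S_conv _ _ _ _ _ _ _ _ half0 half0 halfS (St n) (St k)).
  have := Pt n; have := Pt k; rewrite /psi; ipexp.
  rewrite (ipC (xs k) (xs n)) (ipC (us k) (us n)).
  set a := (n.+1%:R : R)^-1; set b := (k.+1%:R : R)^-1.
  move=> *; lra.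
have cvx : cvgn xs.
  apply: cauchy_ip => n k; rewrite -ipxx; apply: le_trans (cest n k).
  by rewrite lerDl ip_ge0.
have cvu : cvgn us.
  apply: cauchy_ip => n k; rewrite -ipxx; apply: le_trans (cest n k).
  by rewrite lerDr ip_ge0.
set x0 := limn xs; set u0 := limn us.
set r0 := m - (ip x0 x0 + ip u0 u0) / 2.
have S0 : S x0 u0 r0.
  move=> y v Gyv.
  suff: ip x0 v + ip y u0 - ip y v + (ip x0 x0 + ip u0 u0)/2 <= m by rewrite /r0; lra.
  pose f n := ip (xs n) v + ip y (us n) - ip y v + (ip (xs n) (xs n) + ip (us n) (us n))/2.
  have fc : f @ \oo --> (ip x0 v + ip y u0 - ip y v + (ip x0 x0 + ip u0 u0)/2).
    apply: cvgD; [apply: cvgB; [apply: cvgD|exact: cvg_cst]|apply: cvgMr_tmp; apply: cvgD].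
    - by apply: ip_cvg => //; exact: cvg_cst.
    - by apply: ip_cvg => //; exact: cvg_cst.
    - by apply: ip_cvg.
    - by apply: ip_cvg.
  apply/ler_addgt0Pr => e e0.
  have [N hN] : exists N : nat, e^-1 < N.+1%:R by eexists; apply: truncnS_gt.
  have hN' : (N.+1%:R : R)^-1 < e.
    by rewrite -[e]invrK ltf_pV2 ?posrE ?invr_gt0.
  apply: (ler_cvg_to fc (cvg_cst (m + e))).
  exists N => // n /= Nn.
  have h1 := St n y v Gyv; have h2 := Pt n.
  have h3 : (n.+1%:R : R)^-1 <= (N.+1%:R)^-1 by rewrite lef_pV2 ?posrE ?ler_nat.
  move: h1 h2 h3 hN'; rewrite /f /psi.
  set a := (n.+1%:R : R)^-1; set c := (N.+1%:R : R)^-1.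
  move=> *; lra.
have Hm0 : m = r0 + (ip x0 x0 + ip u0 u0) / 2 by rewrite /r0; ring.
have VI x u r : S x u r -> 0 <= r - r0 + ip x0 (x - x0) + ip u0 (u - u0).
  move=> Sx; rewrite leNgt; apply/negP.
  set c := r - r0 + ip x0 (x - x0) + ip u0 (u - u0) => hc.
  set K := (ip (x - x0) (x - x0) + ip (u - u0) (u - u0)) / 2.
  have K0 : 0 <= K by have := ip_ge0 (x - x0); have := ip_ge0 (u - u0); rewrite /K; lra.
  set D := 1 - c + K.
  have D0 : 0 < D by rewrite /D; lra.
  set tt := - c / D.
  have tD : tt * D = - c by rewrite /tt mulfVK // gt_eqF.
  have t0 : 0 < tt by rewrite /tt divr_gt0 // oppr_gt0.
  have t1 : tt <= 1 by rewrite /tt ler_pdivrMr // mul1r /D; lra.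
  have t1' : 0 <= 1 - tt by rewrite subr_ge0.
  have H := Hm _ _ _ (S_conv _ _ _ _ _ _ _ _ t1' (ltW t0) (subrK tt 1) S0 Sx).
  have E : psi ((1 - tt) *: x0 + tt *: x) ((1 - tt) *: u0 + tt *: u) ((1 - tt) * r0 + tt * r) - m
      = tt * (c + tt * K).
    rewrite Hm0 /psi /c /K; ipexp; rewrite (ipC x x0) (ipC u u0); exact: alg_E.
  have A : D * (c + tt * K) = c * (1 - c).
    by apply: alg_A.
  have B : c + tt * K < 0.
    by rewrite -(pmulr_rlt0 _ D0) A nmulr_rlt0 // subr_gt0; apply: lt_trans hc _.
  have : tt * (c + tt * K) < 0 by rewrite pmulr_rlt0.
  by rewrite -E subr_lt0 ltNge H.
have r0_lb : ip x0 u0 <= r0 := S_lb _ _ _ S0.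
have Gm : G (- u0) (- x0).
  apply: Hmax => y v Gyv.
  have := VI _ _ _ (G_S _ _ Gyv); have := ip_ge0 (x0 + u0).
  ipexp; rewrite (ipC y x0) (ipC u0 x0); move: r0_lb; lra.
have := VI _ _ _ (G_S _ _ Gm).
have h0 : x0 + u0 = 0.
  apply: ip_eq0; move: r0_lb (VI _ _ _ (G_S _ _ Gm)); ipexp; rewrite (ipC u0 x0); lra.
have hu : u0 = - x0 by apply/eqP; rewrite -addr_eq0 addrC h0.
by move=> _; exists x0; move: Gm; rewrite hu opprK.
Qed.


Lemma maxP (M : Y -> set Y) : maximally_monotone ip M ->
  forall a b, (forall y v, M y v -> 0 <= ip (y - a) (v - b)) -> M a b.
Proof.
case=> Mmono Mmax a b H.
pose M' y := [set v | M y v \/ (y = a /\ v = b)].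
have mono' : Defs.monotone ip M'.
  move=> y1 q1 y2 q2 [h1|[-> ->]] [h2|[-> ->]].
  - exact: Mmono.
  - exact: H.
  - by have := H _ _ h2; rewrite -(opprB y2 a) -(opprB q2 b) ipNl ipNr opprK.
  - by rewrite !subrr ip0l.
have sub : graph M `<=` graph M' by move=> [y v] h; left.
have E := Mmax M' mono' sub.
have : graph M' (a, b) by right.
by rewrite E.
Qed.

Lemma resolvent (M : Y -> set Y) (lam : R) : maximally_monotone ip M -> 0 < lam ->
  forall z, exists y, M y (lam^-1 *: (z - y)).
Proof.
move=> HM l0 z.
have Mmono := HM.1.
have li0 : 0 < lam^-1 by rewrite invr_gt0.
pose G a b := M a (lam^-1 *: (b + z)).
have G1 : forall y v y' v', G y v -> G y' v' -> 0 <= ip (y - y') (v - v').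
  move=> y v y' v' h h'; have := Mmono _ _ _ _ h h'.
  by rewrite -scalerBr ipZr (addrC v') opprD addrA addrK pmulr_rge0 //.
have G2 : forall a b, (forall y v, G y v -> 0 <= ip (y - a) (v - b)) -> G a b.
  move=> a b H; rewrite /G; apply: (@maxP M HM) => y w Myw.
  have := H y (lam *: w - z).
  rewrite /G subrK scalerA mulVf ?gt_eqF // scale1r => /(_ Myw).
  have -> : w - lam^-1 *: (b + z) = lam^-1 *: (lam *: w - z - b).
    rewrite scalerDr opprD addrA !scalerBr scalerA mulVf ?gt_eqF // scale1r; by rewrite addrAC.
  by rewrite ipZr pmulr_rge0.
have [x Gx] := @minty G G1 G2.
by exists x; move: Gx; rewrite /G addrC.
Qed.

End IP.

Theorem theorem2p6 (R : realType) (Y : completeNormedModType R)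
    (ip : Y -> Y -> R) (mu : R) (Q : Y -> set Y) :
  is_inner_product ip -> 0 < mu ->
  unmonotone ip mu Q -> domain Q = setT ->
  maximally_monotone ip (neg_shift mu Q) ->
  forall M : Y -> set Y, maximally_monotone ip M -> touch M Q.
Proof.
move=> Hip mu0 Hun HD _ M HM.
have Mmono := HM.1.
have Hex : forall y, exists q, Q y q.
  move=> y; have : domain Q y by rewrite HD.
  by case=> q Qq; exists q.
have [f Hf] := choice Hex.
have sv y q : Q y q -> q = f y.
  move=> Qq; have := Hun _ _ _ _ Qq (Hf y).
  rewrite subrr normr0 expr0n /= (ip0l Hip) => h.
  have hN : `|q - f y| ^+ 2 <= 0 by move: h; set N := `|q - f y| ^+ 2 => h; nra.
  apply/eqP; rewrite -subr_eq0; apply/eqP/(ip_eq0 Hip).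
  by rewrite (ipxx Hip).
have uniq y1 q1 y2 q2 : M y1 q1 -> Q y1 q1 -> M y2 q2 -> Q y2 q2 -> (y1, q1) = (y2, q2).
  move=> M1 Q1 M2 Q2.
  have h1 := Mmono _ _ _ _ M1 M2; have h2 := Hun _ _ _ _ Q1 Q2.
  have hs : `|y1 - y2| ^+ 2 + `|q1 - q2| ^+ 2 <= 0.
    have : mu * (`|y1 - y2| ^+ 2 + `|q1 - q2| ^+ 2) <= 0 by lra.
    by rewrite pmulr_rle0.
  have a0 := sqr_ge0 `|y1 - y2|; have b0 := sqr_ge0 `|q1 - q2|.
  have ea : y1 - y2 = 0 by apply: (ip_eq0 Hip); rewrite (ipxx Hip); lra.
  have eb : q1 - q2 = 0 by apply: (ip_eq0 Hip); rewrite (ipxx Hip); lra.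
  by move/eqP: ea; rewrite subr_eq0 => /eqP ->; move/eqP: eb; rewrite subr_eq0 => /eqP ->.
pose lam := mu / (1 + mu ^+ 2).
have m2 : 0 < 1 + mu ^+ 2 by rewrite ltr_wpDr ?sqr_ge0.
have lam0 : 0 < lam by rewrite divr_gt0.
have lamE : lam * (1 + mu ^+ 2) = mu by rewrite /lam mulfVK // gt_eqF.
have lam2 : lam <= 2 * mu by rewrite expr2 in lamE; nra.
have lammu : lam * mu < 1 by rewrite expr2 in lamE; nra.
have [J HJ] := choice (@resolvent _ _ _ Hip M lam HM lam0).
have Jne z z' : `|J z - J z'| ^+ 2 <= `|z - z'| ^+ 2.
  have := Mmono _ _ _ _ (HJ z) (HJ z').
  rewrite -scalerBr (ipZr Hip) => hh.
  have LI : lam * lam^-1 = 1 by rewrite mulfV // gt_eqF.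
  have {hh} : 0 <= ip (J z - J z') (z - J z - (z' - J z')).
    move: hh LI; set I := lam^-1; set P := ip _ _ => hh LI; nra.
  rewrite (_ : z - J z - (z' - J z') = (z - z') - (J z - J z')); last first.
    by rewrite opprB addrA addrAC (addrAC z (- J z)) addrAC [in RHS]opprB [in RHS]addrA.
  have := ip_ge0 Hip ((J z - J z') - (z - z')).
  move: (J z - J z') (z - z') => d e.
  rewrite -!(ipxx Hip) !(ipBl Hip) !(ipBr Hip).
  rewrite (ipC Hip e d); move=> *; lra.
pose Phi y := J (y + lam *: f y).
pose q := 1 - lam * mu.
have q0 : 0 <= q by rewrite /q subr_ge0 ltW.
have q1 : q < 1 by rewrite /q ltrBlDr ltrDl mulr_gt0.
have lip y y' : `|Phi y - Phi y'| <= q * `|y - y'|.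
  have h1 := Jne (y + lam *: f y) (y' + lam *: f y').
  have h2 := Hun _ _ _ _ (Hf y) (Hf y').
  have E : y + lam *: f y - (y' + lam *: f y') = (y - y') + lam *: (f y - f y').
    by rewrite scalerBr opprD addrACA.
  rewrite E in h1.
  rewrite /Phi; move: h1 h2.
  set X := `|J _ - J _|.
  have X0 : 0 <= X by rewrite /X.
  have na := normr_ge0 (y - y').
  move: (y - y') (f y - f y') na => a b na h1 h2.
  rewrite -(ipxx Hip (a + lam *: b)) in h1.
  rewrite -!(ipxx Hip) in h2.
  move: h1; rewrite !(ipDl Hip) !(ipDr Hip) !(ipZl Hip) !(ipZr Hip) (ipC Hip b a) => h1.
  have A0 := ip_ge0 Hip a; have B0 := ip_ge0 Hip b.
  have Ea : `|a| ^+ 2 = ip a a by rewrite (ipxx Hip).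
  move: h1 h2 Ea A0 B0; set A := ip a a; set B := ip b b; set C := ip a b.
  set na' := `|a|.
  move=> h1 h2 Ea A0 B0.
  have k1 : lam * C <= - lam * mu * (A + B) by nra.
  have k2 : lam * lam * B <= 2 * lam * mu * B.
    have := mulr_ge0 (mulr_ge0 (ltW lam0) B0) (eq_ler_sub _ _ lam2); nra.
  have hX : X ^+ 2 <= (q * na') ^+ 2.
    have k3 := mulr_ge0 (sqr_ge0 (lam * mu)) A0.
    rewrite exprMn Ea /q; nra.
  rewrite leNgt; apply/negP => hh.
  have qa0 : 0 <= q * na' by rewrite mulr_ge0.
  have : (q * na') ^+ 2 < X ^+ 2 by rewrite !expr2; apply: ltr_pM.
  by rewrite ltNge hX.
have ctr : is_contraction (totalfun_ setT Phi : {fun setT >-> setT}).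
  exists (NngNum q0); split => //= -[a b] _ /=.
  exact: lip.
have [p _ hp] := banach_fixed_point ctr closedT (ex_intro _ 0 I).
have Mp : M p (f p).
  have := HJ (p + lam *: f p); rewrite -/(Phi p).
  have hp' : Phi p = p by exact: (esym hp).
  rewrite hp' (addrC p) addrK scalerA mulVf ?gt_eqF // scale1r.
  done.
exists (p, f p); apply/seteqP; split.
- by move=> [y v] [/= My Qy]; have := uniq _ _ _ _ My Qy Mp (Hf p).
- by move=> _ ->; split => /=; [exact: Mp | exact: Hf].
Qed.
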